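(* Let $k$ be an algebraically closed field of characteristic $0$, let $A=k\langle x_1,\dots,x_n\rangle/(f_1,\dots,f_h)$ be a noetherian connected graded algebra, let $r\ge1$, $\xi$ a primitive $r$-th root of unity, integers $0<a_j\le r$, and let $G$ be the cyclic group of order $r$ generated by $g=\mathrm{diag}(\xi^{a_1},\dots,\xi^{a_n})$, acting on $A$ (and on $k\langle x_1,\dots,x_n\rangle$) by $g\cdot x_j=\xi^{a_j}x_j$. Then $A*G\cong kQ_G/I$, where $I$ is the two-sided ideal generated by the elements $\phi(f_j*\rho_i)$ for $1\le j\le h$ and $i\in\mathbb{Z}/r\mathbb{Z}$.
   Context: $\rho_i=\frac1r\sum_{p=0}^{r-1}\xi^{ip}g^p\in kG$. The McKay quiver $Q_G$ has vertices $\mathbb{Z}/r\mathbb{Z}$ and arrows $x_{j,i}:i-a_j\to i$ ($i\in\mathbb{Z}/r\mathbb{Z}$, $1\le j\le n$); paths in $kQ_G$ are multiplied by concatenation written left to right, and $e_i$ is the trivial path at $i$. $\phi:k\langle x_1,\dots,x_n\rangle*G\to kQ_G$ is the linear map with $\phi(1*\rho_i)=e_i$ and $\phi(x_{s_1}\cdots x_{s_m}*\rho_i)=x_{s_1,\,i-a_{s_m}-\cdots-a_{s_2}}\cdots x_{s_{m-1},\,i-a_{s_m}}x_{s_m,\,i}$ (it is an algebra isomorphism). The skew group algebra $R*G=R\otimes_kkG$ has multiplication $(a*h)(b*h')=ah(b)*hh'$. *)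

(* Defs.v *)
From HB Require Import structures.
From mathcomp Require Import all_boot all_order all_algebra.
From mathcomp Require Import finmap.
From mathcomp.multinomials Require Import monalg.

Set Implicit Arguments.
Unset Strict Implicit.
Unset Printing Implicit Defensive.

Import GRing.Theory.
Local Open Scope ring_scope.

Definition ideal_gen {T : zmodType} (mul : T -> T -> T) {J : Type}
  (gen : J -> T) (x : T) : Prop :=
  exists l : seq (T * J * T), x = \sum_(t <- l) mul (mul t.1.1 (gen t.1.2)) t.2.

Definition left_ideal {R : pzRingType} (I : R -> Prop) : Prop :=
  [/\ I 0, (forall x y, I x -> I y -> I (x + y)) & (forall a x, I x -> I (a * x))].

Definition right_ideal {R : pzRingType} (I : R -> Prop) : Prop :=
  [/\ I 0, (forall x y, I x -> I y -> I (x + y)) & (forall a x, I x -> I (x * a))].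

Definition acc_chain {R : Type} (P : (R -> Prop) -> Prop) : Prop :=
  forall I : nat -> R -> Prop, (forall m, P (I m)) ->
    (forall m x, I m x -> I m.+1 x) ->
    exists N, forall m, (N <= m)%N -> forall x, I m x <-> I N x.

Definition noetherian (R : pzRingType) : Prop :=
  acc_chain (@left_ideal R) /\ acc_chain (@right_ideal R).

(* The free algebra k<x_1,...,x_n>: monoid algebra of the free monoid *)
(* on 'I_n (words, multiplied by concatenation).                      *)
Definition freealg (k : fieldType) (n : nat) := {malg k[{fmonom 'I_n}]}.

Definition homogeneous (k : fieldType) (n : nat) (f : freealg k n) : Prop :=
  exists d : nat, forall w, w \in msupp f -> size (w : seq 'I_n) = d.

Definition wt (n : nat) (a : 'I_n -> nat) (w : seq 'I_n) : nat :=
  \sum_(s <- w) a s.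

Definition gact (k : fieldType) (n : nat) (a : 'I_n -> nat) (xi : k)
  (f : freealg k n) : freealg k n :=
  \sum_(w <- msupp f) << xi ^+ wt a (w : seq 'I_n) * f@_w *g w >>.

(* Skew group algebra B*G, G = <g> cyclic of order r, represented in  *)
(* the basis {g^p : p < r}: u : {ffun 'I_r -> B} stands for            *)
(* sum_p u p * g^p.  The action of g on B is sigma.                   *)
(* (b*h)(b'*h') = b h(b') * hh'.                                       *)
Definition skew_one (B : nzRingType) (r : nat) : {ffun 'I_r -> B} :=
  [ffun p : 'I_r => if val p == 0%N then 1 else 0].

Definition skew_mul (B : nzRingType) (r : nat) (sigma : B -> B)
  (u v : {ffun 'I_r -> B}) : {ffun 'I_r -> B} :=
  [ffun s : 'I_r => \sum_(p < r) \sum_(q < r | (p + q == s %[mod r])%N)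
                      u p * iter p sigma (v q)].

Definition skew_rho (k : fieldType) (B : lmodType k) (r : nat) (xi : k)
  (b : B) (i : 'I_r) : {ffun 'I_r -> B} :=
  [ffun p : 'I_r => ((r%:R)^-1 * xi ^+ (i * p)) *: b].

(* The path algebra kQ_G of the McKay quiver.  Vertices: Z/rZ = 'I_r. *)
(* Arrows x_{j,i} : i - a_j -> i.  A path (arrows concatenated left to *)
(* right) x_{s_1,i-a_{s_m}-...-a_{s_2}} ... x_{s_m,i} is encoded by    *)
(* the pair (i, [:: s_1; ...; s_m]) (its terminal vertex and its arrow *)
(* labels); this is a bijection onto the set of paths, the trivial     *)
(* path e_i being (i, [::]).  The source of (i, w) is i - wt w mod r.  *)
Definition qpath (r n : nat) := ('I_r * seq 'I_n)%type.

Definition qtgt (r n : nat) (u : qpath r n) : nat := u.1.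

(* u followed by v is a path iff tgt u = src v, i.e. tgt u + wt v = tgt v mod r *)
Definition qcomposable (r n : nat) (a : 'I_n -> nat) (u v : qpath r n) : bool :=
  (u.1 + wt a v.2 == v.1 %[mod r])%N.

Definition pathalg (k : fieldType) (r n : nat) := {malg k[qpath r n]}.

Definition pmul (k : fieldType) (r n : nat) (a : 'I_n -> nat)
  (x y : pathalg k r n) : pathalg k r n :=
  \sum_(u <- msupp x) \sum_(v <- msupp y)
     (if qcomposable a u v then << x@_u * y@_v *g (v.1, u.2 ++ v.2) >> else 0).

Definition pone (k : fieldType) (r n : nat) : pathalg k r n :=
  \sum_(i < r) << ((i, [::]) : qpath r n) >>.

(* e_i-path image of a word-polynomial: f |-> sum_w f_w (path (i,w)),  *)
(* i.e. phi(x_{s_1}...x_{s_m} * rho_i) = (i, [:: s_1; ...; s_m]).       *)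
Definition phi_rho (k : fieldType) (r n : nat) (i : 'I_r) (f : freealg k n)
  : pathalg k r n :=
  \sum_(w <- msupp f) << f@_w *g ((i, (w : seq 'I_n)) : qpath r n) >>.

(* phi : k<x>*G -> kQ_G, the linear map with phi(w * rho_i) = path (i,w). *)
(* Since g^p = sum_i xi^{-ip} rho_i, the rho_i-component of              *)
(* sum_p u_p * g^p is sum_p xi^{-ip} u_p.                                *)
Definition phi (k : fieldType) (r n : nat) (xi : k)
  (u : {ffun 'I_r -> freealg k n}) : pathalg k r n :=
  \sum_(i < r) phi_rho i (\sum_(p < r) (xi^-1 ^+ (i * p)) *: u p).

(* Main.v *)
Require Import Defs.
From HB Require Import structures.
From mathcomp Require Import all_boot all_order all_algebra.
From mathcomp Require Import finmap ring.
From mathcomp.multinomials Require Import monalg.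
Set Implicit Arguments.
Unset Strict Implicit.
Unset Printing Implicit Defensive.
Import GRing.Theory.
Local Open Scope ring_scope.


Lemma msum_w (K : choiceType) (G : zmodType) (V : zmodType) (F : K -> G -> V)
  (F0 : forall u, F u 0 = 0) (x : {malg G[K]}) (d : {fset K}) :
  (msupp x `<=` d)%fset -> \sum_(u <- msupp x) F u x@_u = \sum_(u <- d) F u x@_u.
Proof.
move=> sd; apply: big_fset_incl => // u _ /mcoeff_outdom ->; exact: F0.
Qed.

Lemma uniq_mod (r : nat) (r_gt0 : (0 < r)%N) (W j : nat) :
  exists q0 : 'I_r, forall q : 'I_r, (q + W == j %[mod r])%N = (q == q0).
Proof.
exists (Ordinal (ltn_pmod (j + (r - W %% r)) r_gt0)) => q.
rewrite -modnDmr -(eqn_modDr (r - W %% r)) -addnA subnKC; last first.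
  exact: ltnW (ltn_pmod _ r_gt0).
rewrite modnDr -val_eqE /= modn_small //.
Qed.

Section Roots.
Variables (k : fieldType) (r : nat) (xi : k) (xi_prim : r.-primitive_root xi).

Lemma r_gt0 : (0 < r)%N. Proof. exact: prim_order_gt0 xi_prim. Qed.
Lemma xi_neq0 : xi != 0.
Proof. by rewrite (prim_root_eq0 xi_prim) -lt0n r_gt0. Qed.

Lemma sum_geom (z : k) : z ^+ r = 1 ->
  \sum_(i < r) z ^+ i = if z == 1 then r%:R else 0.
Proof.
move=> zr; case: eqP => [->|nz1].
  by under eq_bigr do rewrite expr1n; rewrite sumr_const card_ord.
have := subrX1 z r; rewrite zr subrr => /esym/eqP; rewrite mulf_eq0 subr_eq0.
by case/orP=> /eqP // /nz1.
Qed.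

Lemma sum_ratio (i j : nat) :
  \sum_(p < r) (xi ^+ i / xi ^+ j) ^+ p = if (i == j %[mod r])%N then r%:R else 0.
Proof.
have xi0 := xi_neq0.
rewrite sum_geom; last first.
  rewrite exprMn -!exprM -exprVn -!exprM mulnC [(j * r)%N]mulnC !exprM.
  by rewrite (prim_expr_order xi_prim) expr1n mul1r exprVn (prim_expr_order xi_prim) invr1 expr1n.
have E (x y : k) : y != 0 -> (x / y == 1) = (x == y).
  move=> y0; apply/eqP/eqP => [h|->]; last exact: divff y0.
  by rewrite -(divfK y0 x) h mul1r.
rewrite E ?expf_neq0 //.
by rewrite (eq_prim_root_expr xi_prim).
Qed.

Lemma orth (i j : 'I_r) :
  \sum_(p < r) xi ^+ (i * p) * xi^-1 ^+ (j * p) = if i == j then r%:R else 0.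
Proof.
transitivity (\sum_(p < r) (xi ^+ i / xi ^+ j) ^+ p).
  by apply: eq_bigr => p _; rewrite exprMn !exprM exprVn -exprVn.
by rewrite sum_ratio !modn_small.
Qed.

Lemma orth' (p q : 'I_r) :
  \sum_(i < r) xi ^+ (i * p) * xi^-1 ^+ (i * q) = if p == q then r%:R else 0.
Proof.
rewrite -orth; apply: eq_bigr => i _; by rewrite mulnC [(i * q)%N]mulnC.
Qed.

Lemma r_neq0 : r%:R != 0 :> k.
Proof. exact: prim_root_natf_neq0 xi_prim. Qed.
End Roots.

Lemma mUZ (K : choiceType) (R : ringType) (c z : R) (w : K) :
  << c * z *g w >> = c *: << z *g w >>.
Proof. by apply/malgP => v; rewrite mcoeffZ !mcoeffU mulrnAr. Qed.

Section IdealGen.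
Variables (T : zmodType) (mul : T -> T -> T) (J : Type) (gen : J -> T).
Lemma ig0 : ideal_gen mul gen 0.
Proof. by exists [::]; rewrite big_nil. Qed.
Lemma igD x y : ideal_gen mul gen x -> ideal_gen mul gen y -> ideal_gen mul gen (x + y).
Proof. by move=> [l1 ->] [l2 ->]; exists (l1 ++ l2); rewrite big_cat. Qed.
Lemma ig_gen b t c : ideal_gen mul gen (mul (mul b (gen t)) c).
Proof. by exists [:: (b, t, c)]; rewrite big_seq1. Qed.
Lemma ig_sum (I : Type) (l : seq I) (F : I -> T) :
  (forall i, ideal_gen mul gen (F i)) -> ideal_gen mul gen (\sum_(i <- l) F i).
Proof. move=> H; elim: l => [|i l IH]; [rewrite big_nil; exact: ig0|].
by rewrite big_cons; apply: igD. Qed.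
End IdealGen.

Section Skew.
Variables (k : fieldType) (A : algType k) (r : nat) (sigma : A -> A).
Hypothesis sigma_lin : forall c x y, sigma (c *: x + y) = c *: sigma x + sigma y.

Definition sigp p := iter p sigma.
Lemma sigp_lin p : linear (sigp p).
Proof. elim: p => [//|p IH] c x y /=; by rewrite IH sigma_lin. Qed.
HB.instance Definition _ p := GRing.isLinear.Build k A A *:%R (sigp p) (sigp_lin p).

Local Notation sm := (@skew_mul A r sigma).

Lemma sm_suml (I : Type) (l : seq I) (F : I -> {ffun 'I_r -> A}) v :
  sm (\sum_(i <- l) F i) v = \sum_(i <- l) sm (F i) v.
Proof.
apply/ffunP => s; rewrite sum_ffunE ffunE; under [RHS]eq_bigr do rewrite ffunE.
rewrite exchange_big; apply: eq_bigr => p _; rewrite exchange_big.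
by apply: eq_bigr => q _; rewrite sum_ffunE mulr_suml.
Qed.

Lemma sm_sumr (I : Type) (l : seq I) (F : I -> {ffun 'I_r -> A}) u :
  sm u (\sum_(i <- l) F i) = \sum_(i <- l) sm u (F i).
Proof.
apply/ffunP => s; rewrite sum_ffunE ffunE; under [RHS]eq_bigr do rewrite ffunE.
rewrite exchange_big; apply: eq_bigr => p _; rewrite exchange_big.
apply: eq_bigr => q _; rewrite sum_ffunE.
by change (iter p sigma) with (sigp p); rewrite raddf_sum mulr_sumr.
Qed.

Lemma smZl c u v : sm (c *: u) v = c *: sm u v.
Proof.
apply/ffunP => s; rewrite !ffunE scaler_sumr; apply: eq_bigr => p _.
rewrite scaler_sumr; apply: eq_bigr => q _; by rewrite ffunE scalerAl.
Qed.

Lemma smZr c u v : sm u (c *: v) = c *: sm u v.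
Proof.
apply/ffunP => s; rewrite !ffunE scaler_sumr; apply: eq_bigr => p _.
rewrite scaler_sumr; apply: eq_bigr => q _; rewrite ffunE.
by change (iter p sigma) with (sigp p); rewrite linearZ /= scalerAr.
Qed.

Lemma sm0r u : sm u 0 = 0.
Proof. by rewrite -[X in sm _ X](scale0r (0 : {ffun 'I_r -> A})) smZr scale0r. Qed.
Lemma sm0l u : sm 0 u = 0.
Proof. by rewrite -[X in sm X _](scale0r (0 : {ffun 'I_r -> A})) smZl scale0r. Qed.
End Skew.

Section Main.
Variables (k : fieldType) (n : nat) (A : algType k)
  (pi : {lrmorphism freealg k n -> A}) (r : nat) (xi : k)
  (xi_prim : r.-primitive_root xi) (a : 'I_n -> nat) (sigma : A -> A).
Hypothesis pi_surj : forall y : A, exists x, pi x = y.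
Hypothesis sigma_def : forall x, sigma (pi x) = pi (gact a xi x).

Local Notation W := (freealg k n).
Local Notation K := (qpath r n).
Local Notation P := (pathalg k r n).

Definition mw (s : seq 'I_n) : W := << (FMonom s : {fmonom 'I_n}) >>.
Definition E (u : K) : {ffun 'I_r -> A} := skew_rho xi (pi (mw u.2)) u.1.
Definition psi (x : P) : {ffun 'I_r -> A} := \sum_(u <- msupp x) x@_u *: E u.

Lemma psi_w x d : (msupp x `<=` d)%fset -> psi x = \sum_(u <- d) x@_u *: E u.
Proof. by move=> sd; rewrite /psi (@msum_w _ _ _ (fun u c => c *: E u) _ x d sd) // => u; rewrite scale0r. Qed.

Lemma psi_lin : linear psi.
Proof.
move=> c x y.
pose d := (msupp (c *: x + y) `|` (msupp x `|` msupp y))%fset.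
rewrite (@psi_w (c *: x + y) d) ?fsubsetUl // (@psi_w x d); last first.
  by apply: fsubset_trans (fsubsetUr _ _); apply: fsubsetUl.
rewrite (@psi_w y d); last first.
  by apply: fsubset_trans (fsubsetUr _ _); apply: fsubsetUr.
rewrite scaler_sumr -big_split; apply: eq_bigr => u _.
by rewrite mcoeffD mcoeffZ scalerDl scalerA.
Qed.
HB.instance Definition _ := GRing.isLinear.Build k P {ffun 'I_r -> A} *:%R psi psi_lin.

Lemma psiU c u : psi << c *g u >> = c *: E u.
Proof.
rewrite /psi msuppU; case: eqP => [->|_]; first by rewrite big_seq_fset0 scale0r.
by rewrite big_seq_fset1 mcoeffUU.
Qed.

Lemma phr_w i x d : (msupp x `<=` d)%fset ->
  @phi_rho k r n i x = \sum_(w <- d) << x@_w *g ((i, (w : seq 'I_n)) : K) >>.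
Proof. by move=> sd; rewrite /phi_rho (@msum_w _ _ _ (fun (w : {fmonom 'I_n}) c => << c *g ((i, (w : seq 'I_n)) : K) >>) _ x d sd) // => u; rewrite monalgU0. Qed.

Lemma phr_lin i : linear (@phi_rho k r n i).
Proof.
move=> c x y.
pose d := (msupp (c *: x + y) `|` (msupp x `|` msupp y))%fset.
rewrite (@phr_w i (c *: x + y) d) ?fsubsetUl // (@phr_w i x d); last first.
  by apply: fsubset_trans (fsubsetUr _ _); apply: fsubsetUl.
rewrite (@phr_w i y d); last first.
  by apply: fsubset_trans (fsubsetUr _ _); apply: fsubsetUr.
rewrite scaler_sumr -big_split; apply: eq_bigr => u _.
by rewrite mcoeffD mcoeffZ monalgUD mUZ.
Qed.
HB.instance Definition _ i := GRing.isLinear.Build k W P *:%R (@phi_rho k r n i) (phr_lin i).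

Lemma phrU i c (m : {fmonom 'I_n}) : @phi_rho k r n i << c *g m >> = << c *g ((i, (m : seq 'I_n)) : K) >>.
Proof.
rewrite /phi_rho msuppU; case: eqP => [->|_]; first by rewrite big_seq_fset0 monalgU0.
by rewrite big_seq_fset1 mcoeffUU.
Qed.


Lemma psi_phr i b : psi (@phi_rho k r n i b) = skew_rho xi (pi b) i.
Proof.
apply/ffunP => p.
rewrite [in LHS](monalgE b) (raddf_sum (@phi_rho k r n i)) raddf_sum sum_ffunE ffunE [in RHS](monalgE b).
rewrite raddf_sum scaler_sumr; apply: eq_bigr => w _.
rewrite /= phrU psiU !ffunE /E /mw /= fmK -[b@_w in RHS]mulr1 mUZ linearZ /=.
by rewrite [in RHS]linearZZ.
Qed.

Lemma psi_phi (u : {ffun 'I_r -> W}) : psi (phi xi u) = [ffun p => pi (u p)].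
Proof.
apply/ffunP => p; rewrite /phi raddf_sum sum_ffunE ffunE.
transitivity (\sum_(i < r) \sum_(q < r) (r%:R^-1 * (xi ^+ (i * p) * xi^-1 ^+ (i * q))) *: pi (u q)).
  apply: eq_bigr => i _; rewrite /= psi_phr ffunE raddf_sum scaler_sumr.
  apply: eq_bigr => q _.
  by rewrite [in RHS]mulrA -[in RHS]scalerA; congr (_ *: _); exact: linearZZ.
rewrite exchange_big /=.
under eq_bigr => q _ do rewrite -scaler_suml -mulr_sumr (orth' xi_prim).
rewrite (bigD1 p) //= big1 ?addr0 => [|q qp].
  by rewrite eqxx mulVf ?scale1r // (r_neq0 xi_prim).
by rewrite eq_sym (negPf qp) mulr0 scale0r.
Qed.


Lemma gact_w x d : (msupp x `<=` d)%fset ->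
  gact a xi x = \sum_(w <- d) << xi ^+ wt a (w : seq 'I_n) * x@_w *g w >>.
Proof.
move=> sd; rewrite /gact (@msum_w _ _ _ (fun (w : {fmonom 'I_n}) c => << xi ^+ wt a (w : seq 'I_n) * c *g w >>) _ x d sd) // => u.
by rewrite mulr0 monalgU0.
Qed.

Lemma gact_lin c x y : gact a xi (c *: x + y) = c *: gact a xi x + gact a xi y.
Proof.
pose d := (msupp (c *: x + y) `|` (msupp x `|` msupp y))%fset.
rewrite (@gact_w (c *: x + y) d) ?fsubsetUl // (@gact_w x d); last first.
  by apply: fsubset_trans (fsubsetUr _ _); apply: fsubsetUl.
rewrite (@gact_w y d); last first.
  by apply: fsubset_trans (fsubsetUr _ _); apply: fsubsetUr.
rewrite scaler_sumr -big_split; apply: eq_bigr => u _.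
by rewrite mcoeffD mcoeffZ mulrDr monalgUD mulrCA mUZ.
Qed.

Lemma sigma_lin c y1 y2 : sigma (c *: y1 + y2) = c *: sigma y1 + sigma y2.
Proof.
case: (pi_surj y1) => x1 <-; case: (pi_surj y2) => x2 <-.
have -> : c *: pi x1 + pi x2 = pi (c *: x1 + x2) by rewrite linearP.
by rewrite !sigma_def gact_lin linearP.
Qed.

Lemma iter_pi p x : iter p sigma (pi x) = pi (iter p (gact a xi) x).
Proof. by elim: p => [//|p IH] /=; rewrite IH sigma_def. Qed.

Lemma gactU c w : gact a xi << c *g w >> = << xi ^+ wt a (w : seq 'I_n) * c *g w >>.
Proof.
rewrite /gact msuppU; case: eqP => [->|_]; first by rewrite big_seq_fset0 mulr0 monalgU0.
by rewrite big_seq_fset1 mcoeffUU.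
Qed.

Lemma iter_gactU p c w : iter p (gact a xi) << c *g w >> =
  << xi ^+ (p * wt a (w : seq 'I_n)) * c *g w >>.
Proof.
elim: p => [|p IH] /=; first by rewrite mul0n expr0 mul1r.
by rewrite IH gactU mulrA -exprD mulSn.
Qed.

Lemma mw_mul s t : mw s * mw t = mw (s ++ t).
Proof.
rewrite /mw malgM_def fgmulUU mulr1; congr << _ *g _ >>.
by apply: val_inj; rewrite /= fmM.
Qed.

Lemma mw_nil : mw [::] = 1.
Proof.
rewrite /mw -mpolyC1E; congr << _ *g _ >>.
by apply: val_inj; rewrite /= fm1.
Qed.


Lemma sm_scal (u v : K) (s : 'I_r) :
  skew_mul sigma (E u) (E v) s =
  (\sum_(p < r) \sum_(q < r | (p + q == s %[mod r])%N)
     (r%:R^-1 * xi ^+ (u.1 * p)) * (xi ^+ (p * wt a v.2) * (r%:R^-1 * xi ^+ (v.1 * q))))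
   *: pi (mw (u.2 ++ v.2)).
Proof.
rewrite ffunE scaler_suml; apply: eq_bigr => p _; rewrite scaler_suml.
apply: eq_bigr => q _; rewrite /E !ffunE.
set c2 := (r%:R^-1 * xi ^+ (v.1 * q)).
have -> : c2 *: pi (mw v.2) = pi << c2 *g (FMonom v.2 : {fmonom 'I_n}) >>.
  by rewrite -[c2 in RHS]mulr1 mUZ; symmetry; exact: linearZZ.
rewrite iter_pi iter_gactU -[_ * c2]mulr1 mUZ /=.
have -> : pi ((xi ^+ (p * wt a v.2) * c2) *: mw v.2) =
   (xi ^+ (p * wt a v.2) * c2) *: pi (mw v.2) by exact: linearZZ.
by rewrite -scalerAl -scalerAr scalerA mulr1 -rmorphM mw_mul.
Qed.

Lemma scal_id (u v : K) (s : 'I_r) :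
  \sum_(p < r) \sum_(q < r | (p + q == s %[mod r])%N)
     (r%:R^-1 * xi ^+ (u.1 * p)) * (xi ^+ (p * wt a v.2) * (r%:R^-1 * xi ^+ (v.1 * q)))
  = if qcomposable a u v then r%:R^-1 * xi ^+ (v.1 * s) else 0.
Proof.
have xi0 := xi_neq0 xi_prim.
have rg := r_gt0 xi_prim.
set W := wt a v.2.
transitivity (\sum_(p < r) (r%:R^-1 * r%:R^-1 * xi ^+ (v.1 * s)) *
                 (xi ^+ (u.1 + W) / xi ^+ v.1) ^+ p).
  apply: eq_bigr => p _.
  have [q0 Hq0] := uniq_mod rg p s.
  rewrite (eq_bigl (fun q : 'I_r => q == q0)); last by move=> q; rewrite addnC Hq0.
  rewrite big_pred1_eq.
  have Hq : xi ^+ (v.1 * q0) = xi ^+ (v.1 * s) / xi ^+ (v.1 * p).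
    apply: (canRL (mulfK (expf_neq0 _ xi0))); rewrite -exprD -mulnDr.
    apply/eqP; rewrite (eq_prim_root_expr xi_prim) -modnMmr.
    have := Hq0 q0; rewrite eqxx => /eqP ->; rewrite modnMmr //.
  rewrite Hq exprMn exprVn -!exprM mulnDl exprD [(W * p)%N]mulnC [(v.1 * p)%N]mulnC.
  ring.
rewrite -mulr_sumr (sum_ratio xi_prim) /qcomposable; case: ifP => _; last by rewrite mulr0.
by field; exact: r_neq0 xi_prim.
Qed.

Lemma smE (u v : K) : skew_mul sigma (E u) (E v) =
  if qcomposable a u v then E ((v.1, u.2 ++ v.2) : K) else 0.
Proof.
apply/ffunP => s; rewrite sm_scal scal_id; case: ifP => _; last by rewrite ffunE scale0r.
by rewrite /E ffunE.
Qed.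

Definition Tm (u v : K) (c : k) : P :=
  if qcomposable a u v then << c *g ((v.1, u.2 ++ v.2) : K) >> else 0.

Lemma Tm0 u v : Tm u v 0 = 0.
Proof. by rewrite /Tm monalgU0; case: ifP. Qed.
Lemma TmD u v c c' : Tm u v (c + c') = Tm u v c + Tm u v c'.
Proof. by rewrite /Tm monalgUD; case: ifP; rewrite ?addr0. Qed.

Lemma pmulE (x y : P) : pmul a x y =
  \sum_(u <- msupp x) \sum_(v <- msupp y) Tm u v (x@_u * y@_v).
Proof. by []. Qed.

Lemma pmul_w (x y : P) d1 d2 : (msupp x `<=` d1)%fset -> (msupp y `<=` d2)%fset ->
  pmul a x y = \sum_(u <- d1) \sum_(v <- d2) Tm u v (x@_u * y@_v).
Proof.
move=> s1 s2; rewrite pmulE (big_fset_incl _ s1) => [|u _ /mcoeff_outdom ->].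
  apply: eq_bigr => u _; apply: big_fset_incl => // v _ /mcoeff_outdom ->.
  by rewrite mulr0 Tm0.
by rewrite big1 // => v _; rewrite mul0r Tm0.
Qed.

Lemma pmulDl (x x' y : P) : pmul a (x + x') y = pmul a x y + pmul a x' y.
Proof.
pose d := (msupp (x + x') `|` (msupp x `|` msupp x'))%fset.
rewrite (@pmul_w (x + x') y d (msupp y)) ?fsubsetUl // (@pmul_w x y d (msupp y)) //; last first.
  by apply: fsubset_trans (fsubsetUr _ _); apply: fsubsetUl.
rewrite (@pmul_w x' y d (msupp y)) //; last first.
  by apply: fsubset_trans (fsubsetUr _ _); apply: fsubsetUr.
rewrite -big_split; apply: eq_bigr => u _; rewrite -big_split; apply: eq_bigr => v _.
by rewrite mcoeffD mulrDl TmD.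
Qed.

Lemma pmulDr (x y y' : P) : pmul a x (y + y') = pmul a x y + pmul a x y'.
Proof.
pose d := (msupp (y + y') `|` (msupp y `|` msupp y'))%fset.
rewrite (@pmul_w x (y + y') (msupp x) d) ?fsubsetUl // (@pmul_w x y (msupp x) d) //; last first.
  by apply: fsubset_trans (fsubsetUr _ _); apply: fsubsetUl.
rewrite (@pmul_w x y' (msupp x) d) //; last first.
  by apply: fsubset_trans (fsubsetUr _ _); apply: fsubsetUr.
rewrite -big_split; apply: eq_bigr => u _; rewrite -big_split; apply: eq_bigr => v _.
by rewrite mcoeffD mulrDr TmD.
Qed.

Lemma pmul0l (y : P) : pmul a 0 y = 0.
Proof. by rewrite pmulE msupp0 big_seq_fset0. Qed.
Lemma pmul0r (x : P) : pmul a x 0 = 0.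
Proof. by rewrite pmulE msupp0; under eq_bigr do rewrite big_seq_fset0; rewrite big1. Qed.

Lemma pmul_suml (I : Type) (l : seq I) (F : I -> P) (y : P) :
  pmul a (\sum_(i <- l) F i) y = \sum_(i <- l) pmul a (F i) y.
Proof.
elim: l => [|i l IH]; first by rewrite !big_nil pmul0l.
by rewrite !big_cons pmulDl IH.
Qed.

Lemma pmul_sumr (I : Type) (l : seq I) (F : I -> P) (x : P) :
  pmul a x (\sum_(i <- l) F i) = \sum_(i <- l) pmul a x (F i).
Proof.
elim: l => [|i l IH]; first by rewrite !big_nil pmul0r.
by rewrite !big_cons pmulDr IH.
Qed.

Lemma pmulU c c' (u v : K) : pmul a << c *g u >> << c' *g v >> = Tm u v (c * c').
Proof.
by rewrite (@pmul_w _ _ [fset u]%fset [fset v]%fset) ?msuppU_le // !big_seq_fset1 !mcoeffUU.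
Qed.

Lemma ig_step (J I : Type) (G : J -> P) (g : I -> J) (X Y : P) (l : seq I) :
  ideal_gen (pmul a) G (pmul a (pmul a X (\sum_(j <- l) G (g j))) Y).
Proof.
rewrite pmul_sumr pmul_suml; apply: ig_sum => j; exact: ig_gen.
Qed.

Lemma psi_mul (x y : P) : psi (pmul a x y) = skew_mul sigma (psi x) (psi y).
Proof.
rewrite pmulE raddf_sum.
transitivity (skew_mul sigma (\sum_(u <- msupp x) x@_u *: E u)
                (\sum_(v <- msupp y) y@_v *: E v)); last by [].
rewrite (sm_suml sigma); apply: eq_bigr => u _.
rewrite (smZl sigma) (sm_sumr sigma_lin) raddf_sum scaler_sumr; apply: eq_bigr => v _.
rewrite (smZr sigma_lin) scalerA smE /Tm; case: ifP => _; last by rewrite raddf0 scaler0.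
by rewrite /= psiU.
Qed.


Local Notation phr i := (@phi_rho k r n i).

Lemma phr_sum (j : 'I_r) (I : Type) (l : seq I) (F : I -> W) :
  phr j (\sum_(i <- l) F i) = \sum_(i <- l) phr j (F i).
Proof. exact: raddf_sum. Qed.

Lemma phr_mulU (j : 'I_r) al be (m m' : {fmonom 'I_n}) :
  phr j (<< al *g m >> * << be *g m' >>) =
  pmul a (\sum_(i < r) phr i << al *g m >>) (phr j << be *g m' >>).
Proof.
have rg := r_gt0 xi_prim.
rewrite malgM_def fgmulUU phrU; under eq_bigr do rewrite phrU.
rewrite phrU pmul_suml; under eq_bigr do rewrite pmulU.
rewrite /Tm /qcomposable /=.
have [i0 Hi0] := uniq_mod rg (wt a m') j.
rewrite -big_mkcond /= (eq_bigl _ _ Hi0) big_pred1_eq /=.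
by rewrite fmM.
Qed.

Lemma phr_mul (j : 'I_r) (c d : W) :
  phr j (c * d) = pmul a (\sum_(i < r) phr i c) (phr j d).
Proof.
transitivity (\sum_(m <- msupp c) \sum_(m' <- msupp d)
                phr j (<< c@_m *g m >> * << d@_m' *g m' >>)).
  rewrite {1}(monalgE c) {1}(monalgE d) mulr_suml (raddf_sum (phr j)).
  by apply: eq_bigr => m _; rewrite mulr_sumr (raddf_sum (phr j)).
transitivity (\sum_(m <- msupp c) \sum_(m' <- msupp d)
   pmul a (\sum_(i < r) phr i << c@_m *g m >>) (phr j << d@_m' *g m' >>)).
  by apply: eq_bigr => m _; apply: eq_bigr => m' _; rewrite phr_mulU.
have HX : \sum_(i < r) phr i c =
          \sum_(m <- msupp c) \sum_(i < r) phr i << c@_m *g m >>.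
  transitivity (\sum_(i < r) \sum_(m <- msupp c) phr i << c@_m *g m >>).
    by apply: eq_bigr => i _; rewrite {1}(monalgE c) (raddf_sum (phr i)).
  exact: exchange_big.
have HY : phr j d = \sum_(m' <- msupp d) phr j << d@_m' *g m' >>.
  by rewrite {1}(monalgE d) (raddf_sum (phr j)).
rewrite HX HY pmul_suml; apply: eq_bigr => m _.
by rewrite pmul_sumr.
Qed.


Lemma rho_coef (B : lmodType k) (b : B) (i j : 'I_r) :
  \sum_(p < r) xi^-1 ^+ (j * p) *: skew_rho xi b i p = (if i == j then 1 else 0) *: b.
Proof.
have -> : \sum_(p < r) xi^-1 ^+ (j * p) *: skew_rho xi b i p =
   (r%:R^-1 * \sum_(p < r) xi ^+ (i * p) * xi^-1 ^+ (j * p)) *: b.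
  rewrite mulr_sumr scaler_suml; apply: eq_bigr => p _; rewrite ffunE scalerA.
  by congr (_ *: _); ring.
rewrite (orth xi_prim); case: eqP => _; last by rewrite mulr0.
by rewrite mulVf // (r_neq0 xi_prim).
Qed.

Lemma phi_skew_rho (b : W) (i : 'I_r) : phi xi (skew_rho xi b i) = phr i b.
Proof.
rewrite /phi.
transitivity (\sum_(i' < r) phr i' ((if i == i' then 1 else 0) *: b)).
  by apply: eq_bigr => i' _; rewrite rho_coef.
rewrite (bigD1 i) //= eqxx scale1r big1 ?addr0 // => i' /negPf.
by rewrite eq_sym => ->; rewrite scale0r raddf0.
Qed.

Definition bi (x : P) (i : 'I_r) : W :=
  \sum_(u <- msupp x) (if u.1 == i then << x@_u *g (FMonom u.2 : {fmonom 'I_n}) >> else 0).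

Lemma decomp (x : P) : x = \sum_(i < r) phr i (bi x i).
Proof.
symmetry.
transitivity (\sum_(i < r) \sum_(u <- msupp x) (if u.1 == i then << x@_u *g u >> else 0)).
  apply: eq_bigr => i _; rewrite (raddf_sum (phr i)); apply: eq_bigr => u _.
  case: eqP => [Hi|_]; last by rewrite raddf0.
  rewrite -Hi; transitivity (<< x@_u *g ((u.1, u.2) : K) >>); first exact: phrU.
  by case: u {Hi}.
rewrite exchange_big /=; rewrite [RHS](monalgE x); apply: eq_bigr => u _.
rewrite -big_mkcond /= (eq_bigl (fun i => i == u.1)) ?big_pred1_eq //.
Qed.

Lemma inv_rho (y : 'I_r -> A) (j : 'I_r) :
  \sum_(p < r) xi^-1 ^+ (j * p) *: (\sum_(i < r) skew_rho xi (y i) i) p = y j.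
Proof.
under eq_bigr do rewrite sum_ffunE scaler_sumr.
rewrite exchange_big /=; under eq_bigr do rewrite rho_coef.
rewrite (bigD1 j) //= eqxx scale1r big1 ?addr0 // => i /negPf ->.
by rewrite scale0r.
Qed.

Lemma pone_phi : pone k r n = phi xi (skew_one W r).
Proof.
have rg := r_gt0 xi_prim.
rewrite /phi /pone; apply: eq_bigr => i _.
rewrite (bigD1 (Ordinal rg)) //= ffunE /= muln0 expr0 scale1r big1 ?addr0 => [|p].
  by rewrite -mpolyC1E phrU fm1.
move=> /negPf; rewrite -val_eqE /= => H; by rewrite ffunE /= H scaler0.
Qed.

End Main.

Theorem theorem5p3
  (k : closedFieldType) (k_char0 : [pchar k] =i pred0)
  (n h : nat) (f : 'I_h -> freealg k n)
  (A : algType k) (pi : {lrmorphism freealg k n -> A})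
  (pi_surj : forall y : A, exists x, pi x = y)
  (pi_ker : forall x, pi x = 0 <-> ideal_gen *%R f x)
  (f_homog : forall j, homogeneous (f j))
  (A_noeth : noetherian A)
  (r : nat) (r_gt0 : (0 < r)%N) (xi : k) (xi_prim : r.-primitive_root xi)
  (a : 'I_n -> nat) (a_range : forall j, (0 < a j <= r)%N)
  (g_order : forall p, (0 < p < r)%N -> exists j, xi ^+ (a j * p) != 1)
  (sigma : A -> A) (sigma_def : forall x, sigma (pi x) = pi (gact a xi x)) :
  exists psi : {linear pathalg k r n -> {ffun 'I_r -> A}},
    [/\ psi (pone k r n) = skew_one A r,
        (forall x y, psi (pmul a x y) = skew_mul sigma (psi x) (psi y)),
        (forall y, exists x, psi x = y) &
        (forall x, psi x = 0 <->
           ideal_gen (pmul a)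
             (fun t : 'I_h * 'I_r => phi xi (skew_rho xi (f t.1) t.2)) x)].
Proof.
have pif0 j : pi (f j) = 0.
  by apply/pi_ker; exists [:: (1, j, 1)]; rewrite big_seq1 /= mul1r mulr1.
exists (psi pi xi); split.
- rewrite /= (pone_phi n xi_prim) (psi_phi pi xi_prim); apply/ffunP => p.
  by rewrite !ffunE; case: eqP => _; rewrite ?rmorph1 ?raddf0.
- move=> x y; exact: (psi_mul xi_prim pi_surj sigma_def).
- move=> y; have [u Hu] := fin_all_exists (fun p => pi_surj (y p)).
  exists (phi xi [ffun p => u p]); rewrite /= (psi_phi pi xi_prim).
  by apply/ffunP => p; rewrite !ffunE Hu.
move=> x; split => [Hx|[l ->]]; last first.
  rewrite raddf_sum big1 // => t _.
  rewrite /= !(psi_mul xi_prim pi_surj sigma_def) (psi_phi pi xi_prim).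
  have -> : [ffun p => pi (skew_rho xi (f t.1.2.1) t.1.2.2 p)] = 0.
    apply/ffunP => p; rewrite !ffunE.
    apply: (etrans (linearZZ pi _ _)) => /=.
    by rewrite pif0 scaler0.
  transitivity (skew_mul sigma (0 : {ffun 'I_r -> A}) (psi pi xi t.2)); last exact: sm0l.
  congr (skew_mul sigma _ _); exact: (sm0r (sigma_lin pi_surj sigma_def)).
have Hs : \sum_(i < r) skew_rho xi (pi (bi x i)) i = 0.
  transitivity (psi pi xi x); last exact: Hx.
  rewrite [in RHS](decomp x) (raddf_sum (psi pi xi)); apply: eq_bigr => i _.
  by symmetry; exact: psi_phr.
have Hb i : pi (bi x i) = 0.
  have := inv_rho xi_prim (fun i => pi (bi x i)) i; rewrite /= Hs => <-.
  by rewrite big1 // => p _; rewrite ffunE scaler0.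
rewrite (decomp x); apply: ig_sum => i.
have [l Hl] := (pi_ker (bi x i)).1 (Hb i).
rewrite Hl phr_sum; apply: ig_sum => t.
rewrite (phr_mul xi_prim a).
have -> : \sum_(i' < r) @phi_rho k r n i' (t.1.1 * f t.1.2) =
   pmul a (\sum_(i' < r) @phi_rho k r n i' t.1.1)
          (\sum_(i' < r) phi xi (skew_rho xi (f t.1.2) i')).
  rewrite pmul_sumr; apply: eq_bigr => i' _.
  by rewrite (phr_mul xi_prim a) (phi_skew_rho xi_prim).
exact: (ig_step a (fun t : 'I_h * 'I_r => phi xi (skew_rho xi (f t.1) t.2)) (fun i' : 'I_r => (t.1.2, i'))).
Qed.
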